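(* Let $k$ be a field, $V$ a $k$-vector space, and $\varphi\in\operatorname{End}_k(V)$ a finite potent endomorphism with core-nilpotent decomposition $\varphi=\varphi_1+\varphi_2$. Then the Drazin inverse $\varphi^D$ of $\varphi$ is a G-Drazin inverse of $\varphi_1$.
   Context: An endomorphism $\varphi$ of a $k$-vector space $V$ is finite potent if $\varphi^n(V)$ is finite dimensional for some $n$. For such $\varphi$, the AST-decomposition is $V=U_\varphi\oplus W_\varphi$ where $U_\varphi=\{v\in V: \varphi^m(v)=0 \text{ for some } m\}$ and $W_\varphi=\{v\in V: p(\varphi)(v)=0 \text{ for some } p(x)\in k[x] \text{ coprime to } x\}$; $\varphi|_{U_\varphi}$ is nilpotent, $W_\varphi$ is finite dimensional and $\varphi|_{W_\varphi}$ is an automorphism. The index $i(\theta)$ of a finite potent $\theta$ is the nilpotency order of $\theta|_{U_\theta}$. The Drazin inverse $\varphi^D$ equals $(\varphi|_{W_\varphi})^{-1}$ on $W_\varphi$ and $0$ on $U_\varphi$. The core-nilpotent decomposition is $\varphi=\varphi_1+\varphi_2$ with $\varphi_1=\varphi\circ\varphi^D\circ\varphi$ and $\varphi_2=\varphi-\varphi_1$. An endomorphism $\psi$ is a G-Drazin inverse of a finite potent $\theta$ with $s=i(\theta)$ if $\theta\circ\psi\circ\theta=\theta$ and $\psi\circ\theta^{s}=\theta^{s}\circ\psi$. *)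

(* Defs.v *)
From HB Require Import structures.
From mathcomp Require Import all_boot all_order all_algebra.
Set Implicit Arguments. Unset Strict Implicit. Unset Printing Implicit Defensive.
Import GRing.Theory.
Local Open Scope ring_scope.

Section FinPotent.
Variables (k : fieldType) (V : lmodType k).

Definition fin_dim_set (S : V -> Prop) : Prop :=
  exists (n : nat) (b : 'I_n -> V),
    forall v, S v -> exists c : 'I_n -> k, v = \sum_(i < n) c i *: b i.

Definition iter_image (phi : V -> V) (n : nat) : V -> Prop :=
  fun v => exists u, v = iter n phi u.

Definition finite_potent (phi : V -> V) : Prop :=
  exists n, fin_dim_set (iter_image phi n).

Definition poly_end (p : {poly k}) (phi : V -> V) (v : V) : V :=
  \sum_(i < size p) p`_i *: iter i phi v.

Definition U_part (phi : V -> V) : V -> Prop :=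
  fun v => exists m, iter m phi v = 0.
Definition W_part (phi : V -> V) : V -> Prop :=
  fun v => exists p : {poly k}, coprimep p 'X /\ poly_end p phi v = 0.

Definition is_index (theta : V -> V) (s : nat) : Prop :=
  (forall v, U_part theta v -> iter s theta v = 0) /\
  (forall m, (forall v, U_part theta v -> iter m theta v = 0) -> (s <= m)%N).

Definition is_drazin_inverse (phi psi : V -> V) : Prop :=
  (forall v, U_part phi v -> psi v = 0) /\
  (forall w, W_part phi w -> W_part phi (psi w) /\ phi (psi w) = w).

Definition is_GDrazin_inverse (theta psi : V -> V) : Prop :=
  finite_potent theta /\
  (forall v, theta (psi (theta v)) = theta v) /\
  exists s, is_index theta s /\
    (forall v, psi (iter s theta v) = iter s theta (psi v)).

End FinPotent.

(* Main.v *)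
Require Import Defs.
From mathcomp Require Import all_boot all_order all_algebra.
From mathcomp Require Import ring.
From Stdlib Require Import Classical.
Set Implicit Arguments. Unset Strict Implicit. Unset Printing Implicit Defensive.
Import GRing.Theory.
Local Open Scope ring_scope.

Section PE.
Variables (k : fieldType) (V : lmodType k) (phi : {linear V -> V}).

Lemma iter_sub i (x y : V) : iter i phi (x - y) = iter i phi x - iter i phi y.
Proof. by elim: i => //= i ->; rewrite linearB. Qed.

Lemma iter_zero i : iter i phi (0 : V) = 0.
Proof. by elim: i => //= i ->; rewrite linear0. Qed.

Lemma pe_bound (p : {poly k}) N v : (size p <= N)%N ->
  poly_end p phi v = \sum_(i < N) p`_i *: iter i phi v.
Proof.
move=> h; rewrite /poly_end (big_ord_widen N (fun i => p`_i *: iter i phi v)) //.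
rewrite big_mkcond; apply: eq_bigr => i _; case: ifP => // /negbT.
by rewrite -leqNgt => hi; rewrite nth_default // scale0r.
Qed.

Lemma pe_add p q v : poly_end (p + q) phi v = poly_end p phi v + poly_end q phi v.
Proof.
rewrite !(@pe_bound _ (maxn (size p) (size q))) ?leq_maxl ?leq_maxr ?size_polyD //.
by rewrite -big_split; apply: eq_bigr => i _; rewrite coefD scalerDl.
Qed.

Lemma pe_scale c p v : poly_end (c *: p) phi v = c *: poly_end p phi v.
Proof.
rewrite !(@pe_bound _ (size p)) ?size_scale_leq // scaler_sumr.
by apply: eq_bigr => i _; rewrite coefZ scalerA.
Qed.

Lemma pe_C c v : poly_end c%:P phi v = c *: v.
Proof.
rewrite (@pe_bound _ 1) ?size_polyC_leq1 // big_ord1 coefC /=. by [].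
Qed.

Lemma pe_0 v : poly_end 0 phi v = 0.
Proof. by rewrite /poly_end size_poly0 big_ord0. Qed.

Lemma pe_XM q v : poly_end ('X * q) phi v = phi (poly_end q phi v).
Proof.
have h : (size ('X * q)%R <= (size q).+1)%N.
  apply: leq_trans (size_polyMleq _ _) _; rewrite size_polyX /=. by [].
rewrite (pe_bound _ h) big_ord_recl coefXM /= scale0r add0r.
rewrite /poly_end linear_sum; apply: eq_bigr => i _.
by rewrite coefXM /= linearZ.
Qed.

Lemma pe_mul p q v : poly_end (p * q) phi v = poly_end p phi (poly_end q phi v).
Proof.
elim/poly_ind: p q v => [|p c IH] q v; first by rewrite mul0r !pe_0.
rewrite mulrDl -mulrA pe_add IH pe_XM mul_polyC pe_scale pe_add pe_C.
congr (_ + _); rewrite IH; congr (poly_end p phi _).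
by rewrite -['X]mulr1 pe_XM -polyC1 pe_C scale1r.
Qed.

Lemma pe_1 v : poly_end 1 phi v = v.
Proof. by rewrite -polyC1 pe_C scale1r. Qed.

Lemma pe_X v : poly_end 'X phi v = phi v.
Proof. by rewrite -[X in poly_end X]mulr1 pe_XM pe_1. Qed.

Lemma pe_Xn m v : poly_end ('X^m) phi v = iter m phi v.
Proof. by elim: m v => [|m IH] v; rewrite ?expr0 ?pe_1 // exprS pe_XM IH. Qed.

Lemma pe_comm p v : poly_end p phi (phi v) = phi (poly_end p phi v).
Proof. by rewrite -pe_X -pe_mul mulrC pe_mul pe_X. Qed.

Lemma pe_vsub p x y : poly_end p phi (x - y) = poly_end p phi x - poly_end p phi y.
Proof. by rewrite /poly_end -sumrB; apply: eq_bigr => i _; rewrite iter_sub scalerBr. Qed.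

Lemma pe_v0 p : poly_end p phi 0 = 0.
Proof. by rewrite /poly_end big1 // => i _; rewrite iter_zero scaler0. Qed.

End PE.
Lemma lin_dep (k : fieldType) (d : nat) (M : 'M[k]_(d.+1, d)) :
  exists2 x : 'rV[k]_(d.+1), x != 0 & x *m M = 0.
Proof.
have : kermx M != 0.
  rewrite kermx_eq0 /row_free; apply/negP => /eqP h.
  by have := rank_leq_col M; rewrite h ltnn.
case/rowV0Pn => x; rewrite sub_kermx => /eqP h xn0; by exists x.
Qed.

Section Decomp.
Variables (k : fieldType) (V : lmodType k) (phi : {linear V -> V}).

Lemma decomp : finite_potent phi -> forall v, exists u w,
  U_part phi u /\ W_part phi w /\ v = u + w.
Proof.
move=> [n [d [b hb]]] v.
have hc : forall i : 'I_d.+1, exists c : 'I_d -> k,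
    iter (i + n) phi v = \sum_(j < d) c j *: b j.
  move=> i; apply: hb; exists (iter i phi v); by rewrite addnC iterD.
have [c hc'] := fin_all_exists hc.
have [x xn0 hx] := lin_dep (\matrix_(i, j) c i j).
pose q : {poly k} := \poly_(i < d.+1) x 0 (inord i).
have qn0 : q != 0.
  apply: contra xn0 => /eqP q0; apply/eqP/matrixP => i j.
  rewrite (ord1 i) !mxE.
  have := congr1 (fun p : {poly k} => p`_j) q0.
  by rewrite coef_poly ltn_ord inord_val coef0.
pose P := q * 'X^n.
have Pn0 : P != 0 by rewrite mulf_neq0 // expf_neq0 // polyX_eq0.
have Pv : poly_end P phi v = 0.
  rewrite /P pe_mul pe_Xn (@pe_bound _ _ _ _ d.+1) ?size_poly //.
  under eq_bigr => i _ do rewrite coef_poly ltn_ord inord_val -iterD hc' scaler_sumr.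
  rewrite exchange_big /= big1 // => j _.
  under eq_bigr => i _ do rewrite scalerA.
  rewrite -scaler_suml.
  have := congr1 (fun m : 'M[k]_(1, d) => m 0 j) hx; rewrite !mxE => hj.
  have hj' : \sum_(i < d.+1) x 0 i * c i j = 0.
    by rewrite -[RHS]hj; apply: eq_bigr => i _; rewrite mxE.
  by rewrite hj' scale0r.
have [m [r hr PE]] := multiplicity_XsubC P 0.
rewrite Pn0 /= in hr.
rewrite polyC0 subr0 in PE.
have cr : coprimep r 'X by rewrite -[X in coprimep _ X]subr0 -polyC0 coprimep_XsubC.
have [[u1 u2] /= hu] := Bezout_eq1_coprimepP _ _ (coprimep_expr m cr).
exists (poly_end (u1 * r) phi v), (poly_end (u2 * 'X^m) phi v).
split; last split.
- exists m; rewrite -pe_Xn -pe_mul.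
  have -> : 'X^m * (u1 * r) = u1 * P by rewrite PE; ring.
  by rewrite pe_mul Pv pe_v0.
- exists r; split => //; rewrite -pe_mul.
  have -> : r * (u2 * 'X^m) = u2 * P by rewrite PE; ring.
  by rewrite pe_mul Pv pe_v0.
- by rewrite -pe_add hu pe_1.
Qed.
End Decomp.

Section Main.
Variables (k : fieldType) (V : lmodType k) (phi phiD : {linear V -> V}).
Hypothesis hfp : finite_potent phi.
Hypothesis hD : is_drazin_inverse phi phiD.

Let U := U_part phi.
Let W := W_part phi.

Lemma Uphi u : U u -> U (phi u).
Proof. by case=> m hm; exists m; rewrite -iterSr iterS hm linear0. Qed.

Lemma Wphi w : W w -> W (phi w).
Proof. by case=> p [cp hp]; exists p; split => //; rewrite pe_comm hp linear0. Qed.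

Lemma Witer i w : W w -> W (iter i phi w).
Proof. by elim: i => //= i IH /IH; apply: Wphi. Qed.

Lemma Wsub x y : W x -> W y -> W (x - y).
Proof.
case=> p [cp hp] [q [cq hq]]; exists (p * q); split.
  by rewrite coprimepMl cp cq.
by rewrite pe_vsub {1}mulrC !pe_mul hp hq !pe_v0 subr0.
Qed.

Lemma Winj w : W w -> phi w = 0 -> w = 0.
Proof.
case=> p [cp hp] h0.
move: hp; rewrite (@pe_bound _ _ _ _ (size p).+1) // big_ord_recl /=.
rewrite big1 ?addr0 => [|i _]; last by rewrite add0n -iterS iterSr h0 iter_zero scaler0.
move/eqP; rewrite scaler_eq0 => /orP [|/eqP //].
move: cp; rewrite -[X in coprimep _ X]subr0 -polyC0 coprimep_XsubC /root horner_coef0.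
by move=> /negbTE ->.
Qed.

Lemma Winj_iter m w : W w -> iter m phi w = 0 -> w = 0.
Proof.
elim: m w => [|m IH] w hw //=; rewrite -/(iter m.+1 phi w) iterSr => h.
by apply: Winj => //; apply: IH => //; apply: Wphi.
Qed.

Lemma PW w : W w -> phiD (phi w) = w.
Proof.
move=> hw; have [h1 h2] := hD.2 _ (Wphi hw).
apply/eqP; rewrite -subr_eq0; apply/eqP; apply: Winj.
  by apply: Wsub.
by rewrite linearB h2 subrr.
Qed.

Lemma Pdec v : exists w, W w /\ phiD (phi v) = w /\ W (phiD v) /\ phi (phiD v) = w.
Proof.
have [u [w [hu [hw ->]]]] := decomp hfp v.
have [hw1 hw2] := hD.2 _ hw.
have e1 : phiD (u + w) = phiD w by rewrite linearD hD.1 // add0r.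
have e2 : phiD (phi (u + w)) = w.
  by rewrite linearD linearD (hD.1 _ (Uphi hu)) add0r PW.
by exists w; rewrite e1 e2.
Qed.

Let th := fun v => phi (phiD (phi v)).

Lemma PWv v : W (phiD (phi v)).
Proof. by have [w [hw [-> _]]] := Pdec v. Qed.

Lemma iter_th j v : iter j.+1 th v = iter j.+1 phi (phiD (phi v)).
Proof.
elim: j => [//|j IH]; rewrite iterS IH /th PW //.
by apply: Witer; apply: PWv.
Qed.

End Main.

Theorem corollary3p6 (k : fieldType) (V : lmodType k)
    (phi phiD : {linear V -> V}) :
  finite_potent phi ->
  is_drazin_inverse phi phiD ->
  is_GDrazin_inverse (fun v => phi (phiD (phi v))) phiD.
Proof.
move=> hfp hD.
have ith := iter_th hfp hD.
have PW' := PW hD.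
have PWv' := PWv hfp hD.
split; last split.
- case: (hfp) => n [d [b hb]]; exists n, d, b => x [y ->]; apply: hb.
  case: n => [|n]; first by exists y.
  by rewrite ith; exists (phiD (phi y)).
- by move=> v; rewrite PW' // PW' //.
case: (classic (forall v, U_part (fun v => phi (phiD (phi v))) v -> v = 0)) => hc.
  exists 0%N; split; last by [].
  by split => // v /hc ->.
exists 1%N; split.
  split.
    move=> v [[|m] hm].
      by rewrite /= in hm; rewrite hm /= !linear0.
    rewrite ith in hm; have := Winj_iter (PWv' v) hm.
    by move=> /= ->; rewrite linear0.
  move=> [|m] // h; exfalso; apply: hc => v hv; exact: h _ hv.
move=> v /=; rewrite PW' //.
have [w [hw [-> [h1 h2]]]] := Pdec hfp hD v.
by rewrite PW' // h2.
Qed.
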